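(* For every integer $t$, \begin{align*} \sum_{n=1}^\infty(-1)^{n-1}\binom{2n}{n}\frac{O_n}{16^n}L_{2n+t}&=\frac{\alpha^t}{\sqrt{\alpha+5}}\ln\Bigl(\frac{\alpha+5}{4}\Bigr)+\frac{\beta^t}{\sqrt{\beta+5}}\ln\Bigl(\frac{\beta+5}{4}\Bigr),\\ \sum_{n=1}^\infty(-1)^{n-1}\binom{2n}{n}\frac{O_n}{16^n}F_{2n+t}&=\frac1{\sqrt5}\left(\frac{\alpha^t}{\sqrt{\alpha+5}}\ln\Bigl(\frac{\alpha+5}{4}\Bigr)-\frac{\beta^t}{\sqrt{\beta+5}}\ln\Bigl(\frac{\beta+5}{4}\Bigr)\right), \end{align*} and, for every gibonacci sequence $G_j=G_j(a,b)$, \[ \sum_{n=1}^\infty(-1)^{n-1}\binom{2n}{n}\frac{O_n}{16^n}G_{2n+t}=\frac1{\sqrt5}\left(\frac{(b-a\beta)\alpha^t}{\sqrt{\alpha+5}}\ln\Bigl(\frac{\alpha+5}{4}\Bigr)-\frac{(b-a\alpha)\beta^t}{\sqrt{\beta+5}}\ln\Bigl(\frac{\beta+5}{4}\Bigr)\right). \]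
   Context: $O_n=\sum_{j=1}^n\frac1{2j-1}$. $F_n$ and $L_n$ are the Fibonacci and Lucas numbers ($F_0=0,F_1=1$, $L_0=2,L_1=1$, $u_n=u_{n-1}+u_{n-2}$), extended to all integers by the recurrence. $\alpha=(1+\sqrt5)/2$, $\beta=-1/\alpha$. For numbers $a,b$ not both zero, the gibonacci sequence $G_j=G_j(a,b)$ is defined by $G_0=a$, $G_1=b$, $G_j=G_{j-1}+G_{j-2}$, extended to negative indices by $G_{-j}=G_{-(j-2)}-G_{-(j-1)}$; equivalently $G_j=\frac{(b-a\beta)\alpha^j+(a\alpha-b)\beta^j}{\alpha-\beta}$. *)

(* Defs.v *)
From Stdlib Require Import Reals ZArith.
From Coquelicot Require Import Coquelicot.
Open Scope R_scope.

Fixpoint Odd_harm (n : nat) : R :=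
  match n with
  | O => 0
  | S m => Odd_harm m + / (2 * INR (S m) - 1)
  end.

Fixpoint gib_fwd (a b : R) (n : nat) : R * R :=
  match n with
  | O => (a, b)
  | S m => let (x, y) := gib_fwd a b m in (y, x + y)
  end.

(* backward pairs (G_{-n}, G_{-n+1}), using G_{k-1} = G_{k+1} - G_k *)
Fixpoint gib_bwd (a b : R) (n : nat) : R * R :=
  match n with
  | O => (a, b)
  | S m => let (x, y) := gib_bwd a b m in (y - x, x)
  end.

Definition gib (a b : R) (j : Z) : R :=
  match j with
  | Z0 => a
  | Zpos p => fst (gib_fwd a b (Pos.to_nat p))
  | Zneg p => fst (gib_bwd a b (Pos.to_nat p))
  end.

Definition Fib (j : Z) : R := gib 0 1 j.
Definition Luc (j : Z) : R := gib 2 1 j.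

Definition alpha : R := (1 + sqrt 5) / 2.
Definition beta : R := - / alpha.

Definition coef (n : nat) : R :=
  (-1) ^ (n - 1) * Binomial.C (2 * n) n * Odd_harm n / 16 ^ n.

(* Main.v *)
Require Import Defs.
From Stdlib Require Import Reals ZArith Lra Lia.
From Coquelicot Require Import Coquelicot.
Open Scope R_scope.

Definition dd (n : nat) : R := Binomial.C (2 * n) n / 4 ^ n.
Definition aa (n : nat) : R := (-1) ^ (n - 1) * dd n * Odd_harm n.
Definition cc (n : nat) : R := / 2 * (-1) ^ n * dd n.

Lemma C_step n : Binomial.C (2 * S n) (S n) =
  Binomial.C (2 * n) n * (INR (2*n+2) * INR (2*n+1)) / (INR (S n) * INR (S n)).
Proof.
  unfold Binomial.C.
  replace (2 * S n - S n)%nat with (S n) by lia.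
  replace (2 * n - n)%nat with n by lia.
  replace (2 * S n)%nat with (S (S (2 * n))) by lia.
  rewrite !fact_simpl, !mult_INR.
  replace (INR (2*n+2)) with (INR (S (S (2*n)))) by (f_equal; lia).
  replace (INR (2*n+1)) with (INR (S (2*n))) by (f_equal; lia).
  assert (INR (Factorial.fact n) <> 0) by (apply not_0_INR; apply Factorial.fact_neq_0).
  assert (INR (S n) <> 0) by (apply not_0_INR; lia).
  field; auto.
Qed.

Lemma dd_step n : dd (S n) = dd n * ((2 * INR n + 1) / (2 * INR n + 2)).
Proof.
  unfold dd. rewrite C_step.
  replace (INR (2*n+2)) with (2 * (INR n + 1)) by (rewrite plus_INR, mult_INR; simpl; ring).
  replace (INR (2*n+1)) with (2 * INR n + 1) by (rewrite plus_INR, mult_INR; simpl; ring).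
  rewrite S_INR. simpl.
  assert (0 < 4 ^ n) by (apply pow_lt; lra).
  assert (0 <= INR n) by apply pos_INR.
  field. lra.
Qed.

Lemma dd_bound n : 0 <= dd n <= 1.
Proof.
  induction n.
  - unfold dd, Binomial.C. simpl. lra.
  - rewrite dd_step. assert (0 <= INR n) by apply pos_INR.
    assert (0 <= (2 * INR n + 1) / (2 * INR n + 2) <= 1).
    { split. apply Rdiv_le_0_compat; lra. apply Rmult_le_reg_r with (2 * INR n + 2). lra.
      unfold Rdiv; rewrite Rmult_assoc, Rinv_l; lra. }
    nra.
Qed.

Lemma Odd_harm_bound n : 0 <= Odd_harm n <= INR n.
Proof.
  induction n.
  - simpl; lra.
  - change (Odd_harm (S n)) with (Odd_harm n + / (2 * INR (S n) - 1)). rewrite S_INR.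
    assert (0 <= INR n) by apply pos_INR.
    assert (0 < / (2 * (INR n + 1) - 1) <= 1).
    { split. apply Rinv_0_lt_compat; lra.
      rewrite <- Rinv_1. apply Rinv_le_contravar; lra. }
    lra.
Qed.

Lemma I1 n : INR (S n) * aa (S n) + (INR n + / 2) * aa n = cc n.
Proof.
  unfold aa, cc. rewrite dd_step. change (Odd_harm (S n)) with (Odd_harm n + / (2 * INR (S n) - 1)). rewrite S_INR.
  replace (S n - 1)%nat with n by lia.
  destruct n.
  - simpl. unfold dd, Binomial.C; simpl. field.
  - replace (S n - 1)%nat with n by lia. rewrite S_INR. simpl pow.
    assert (0 <= INR n) by apply pos_INR.
    field. lra.
Qed.

Lemma I2 n : INR (S n) * cc (S n) + (INR n + / 2) * cc n = 0.
Proof.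
  unfold cc. rewrite dd_step, S_INR. simpl pow.
  assert (0 <= INR n) by apply pos_INR.
  field. lra.
Qed.

Lemma bern h n : 0 <= h -> 1 + INR n * h <= (1 + h) ^ n.
Proof.
  intro Hh. induction n.
  - simpl; lra.
  - rewrite S_INR. simpl pow.
    assert (0 <= INR n) by apply pos_INR.
    assert (0 <= INR n * h * h) by (apply Rmult_le_pos; [apply Rmult_le_pos|]; lra).
    nra.
Qed.

Lemma radius_ge (e : nat -> R) : (forall n, Rabs (e n) <= INR n + 1) ->
  forall x, Rabs x < 4/5 -> Rbar_lt (Rabs x) (CV_radius e).
Proof.
  intros He x Hx.
  apply Rbar_lt_le_trans with (4/5).
  - simpl; lra.
  - destruct (CV_radius_bounded e) as [Hub _]. apply Hub.
    exists 4. intro n.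
    rewrite Rabs_mult, (Rabs_pos_eq ((4/5)^n)) by (apply pow_le; lra).
    assert (Hb := bern (1/4) n). 
    assert (0 <= INR n) by apply pos_INR.
    assert ((5/4)^n * (4/5)^n = 1).
    { rewrite <- Rpow_mult_distr. replace (5/4*(4/5)) with 1 by field. apply pow1. }
    replace (1 + 1/4) with (5/4) in Hb by field.
    assert (0 < (4/5)^n) by (apply pow_lt; lra).
    apply Rle_trans with ((INR n + 1) * (4/5)^n).
    + apply Rmult_le_compat_r; [lra| apply He].
    + nra.
Qed.

Lemma ps_is (e : nat -> R) x : ex_pseries e x -> is_series (fun n => e n * x ^ n) (PSeries e x).
Proof.
  intro H. apply Series_correct.
  eapply ex_series_ext; [|exact H]. intro n. simpl. rewrite pow_n_pow.
  change (scal (x^n) (e n)) with (x^n * e n). ring.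
Qed.

Lemma Lshift e k x : Rbar_lt (Rabs x) (CV_radius e) ->
 (1+x) * PSeries (PS_derive e) x + k * PSeries e x
   = PSeries (fun n => PS_derive e n + (INR n + k) * e n) x.
Proof.
  intro Hx.
  pose proof (ps_is _ _ (ex_pseries_derive _ _ Hx)) as H1.
  pose proof (ps_is _ _ (CV_radius_inside _ _ Hx)) as H0.
  set (S1 := PSeries (PS_derive e) x) in *.
  set (S0 := PSeries e x) in *.
  assert (H2 : is_series (fun n => INR n * e n * x ^ n) (x * S1)).
  { apply is_series_decr_1.
    pose proof (is_series_scal x _ _ H1) as H3.
    match goal with |- is_series _ ?l => replace l with (scal x S1) end.
    2:{ change (x * S1 = x * S1 + - (0 * e 0%nat * 1)). ring. }
    eapply is_series_ext; [|exact H3].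
    intro n. unfold PS_derive. change (x * (INR (S n) * e (S n) * x ^ n) = INR (S n) * e (S n) * x ^ S n).
    simpl pow. ring. }
  pose proof (is_series_plus _ _ _ _ H1 (is_series_plus _ _ _ _ H2 (is_series_scal k _ _ H0))) as H4.
  symmetry. apply is_series_unique.
  match goal with |- is_series _ ?l => replace l with (plus S1 (plus (x * S1) (scal k S0))) end.
  2:{ change (S1 + (x * S1 + k * S0) = (1 + x) * S1 + k * S0). ring. }
  eapply is_series_ext; [|exact H4].
  intro n. change (PS_derive e n * x ^ n + (INR n * e n * x ^ n + k * (e n * x ^ n)) =
       (PS_derive e n + (INR n + k) * e n) * x ^ n). ring.
Qed.

Lemma const_zero_deriv (f : R -> R) r u :
  (forall x, Rabs x < r -> is_derive f x 0) -> Rabs u < r -> f u = f 0.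
Proof.
  intros Hd Hu.
  destruct (MVT_gen f 0 u (fun _ => 0)) as [c [_ Hc]].
  - intros x [H1 H2]. apply Hd.
    unfold Rmin, Rmax in *. destruct (Rle_dec 0 u); apply Rabs_def1; unfold Rabs in Hu; destruct (Rcase_abs u); lra.
  - intros x [H1 H2]. apply continuity_pt_filterlim. apply (ex_derive_continuous f x).
    eexists. apply Hd.
    unfold Rmin, Rmax in *. destruct (Rle_dec 0 u); apply Rabs_def1; unfold Rabs in Hu; destruct (Rcase_abs u); lra.
  - lra.
Qed.

Lemma aa_bound n : Rabs (aa n) <= INR n + 1.
Proof.
  unfold aa. rewrite !Rabs_mult, pow_1_abs.
  destruct (dd_bound n), (Odd_harm_bound n).
  rewrite (Rabs_pos_eq (dd n)), (Rabs_pos_eq (Odd_harm n)) by lra. nra.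
Qed.

Lemma cc_bound n : Rabs (cc n) <= INR n + 1.
Proof.
  unfold cc. rewrite !Rabs_mult, pow_1_abs.
  destruct (dd_bound n). assert (0 <= INR n) by apply pos_INR.
  rewrite (Rabs_pos_eq (dd n)), (Rabs_pos_eq (/2)) by lra. nra.
Qed.

Lemma sqrt_deriv x : -1 < x -> is_derive (fun y => sqrt (1 + y)) x (/ (2 * sqrt (1 + x))).
Proof.
  intro Hx.
  assert (H := is_derive_sqrt (fun y => 1 + y) x 1).
  replace (/ (2 * sqrt (1 + x))) with (1 / (2 * sqrt (1 + x))) by (unfold Rdiv; ring).
  apply H. auto_derive; auto. simpl; lra.
Qed.

Lemma C_closed x : Rabs x < 4/5 -> PSeries cc x = / (2 * sqrt (1 + x)).
Proof.
  intro Hx.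
  assert (HE : forall y, Rabs y < 4/5 -> (1 + y) * PSeries (PS_derive cc) y + /2 * PSeries cc y = 0).
  { intros y Hy. rewrite Lshift by (apply radius_ge; [apply cc_bound|exact Hy]).
    rewrite <- (PSeries_const_0 y). apply PSeries_ext. intro n. unfold PS_derive. apply I2. }
  assert (Hc := const_zero_deriv (fun y => sqrt (1 + y) * PSeries cc y) (4/5) x).
  simpl in Hc. rewrite Rplus_0_r, sqrt_1, Rmult_1_l, PSeries_0 in Hc.
  assert (Hx' : -1 < x) by (apply Rabs_def2 in Hx; lra).
  assert (Hs : 0 < sqrt (1 + x)) by (apply sqrt_lt_R0; lra).
  assert (Hss : sqrt (1 + x) * sqrt (1 + x) = 1 + x) by (apply sqrt_sqrt; lra).
  assert (Heq : sqrt (1 + x) * PSeries cc x = cc 0%nat).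
  { apply Hc; [|exact Hx]. intros y Hy.
    assert (Hy' : -1 < y) by (apply Rabs_def2 in Hy; lra).
    assert (Ht : 0 < sqrt (1 + y)) by (apply sqrt_lt_R0; lra).
    assert (Htt : sqrt (1 + y) * sqrt (1 + y) = 1 + y) by (apply sqrt_sqrt; lra).
    assert (D := is_derive_mult _ _ y _ _ (sqrt_deriv y Hy')
               (is_derive_PSeries cc y (radius_ge _ cc_bound y Hy)) (fun a b => Rmult_comm a b)).
    replace 0 with (plus (mult (/ (2 * sqrt (1 + y))) (PSeries cc y))
                    (mult (sqrt (1 + y)) (PSeries (PS_derive cc) y))); [exact D|].
    change (/ (2 * sqrt (1 + y)) * PSeries cc y + sqrt (1 + y) * PSeries (PS_derive cc) y = 0).
    specialize (HE y Hy).
    apply Rmult_eq_reg_l with (2 * sqrt (1 + y)); [|lra].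
    rewrite Rmult_0_r, Rmult_plus_distr_l.
    field_simplify; [|lra]. replace (sqrt (1 + y) ^ 2) with (1 + y) by (simpl; lra). transitivity (2 * ((1 + y) * PSeries (PS_derive cc) y + /2 * PSeries cc y)); [field | rewrite HE; ring]. }
  assert (Hc0 : cc 0%nat = /2) by (unfold cc, dd, Binomial.C; simpl; field).
  apply Rmult_eq_reg_l with (2 * sqrt (1 + x)); [|lra]. field_simplify; [|lra].
  transitivity (2 * (sqrt (1 + x) * PSeries cc x)); [ring|]. rewrite Heq, Hc0. field.
Qed.

Lemma A_closed x : Rabs x < 4/5 -> PSeries aa x = ln (1 + x) / (2 * sqrt (1 + x)).
Proof.
  intro Hx.
  assert (HE : forall y, Rabs y < 4/5 -> (1 + y) * PSeries (PS_derive aa) y + /2 * PSeries aa y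
                                      = / (2 * sqrt (1 + y))).
  { intros y Hy. rewrite Lshift by (apply radius_ge; [apply aa_bound|exact Hy]).
    rewrite <- (C_closed y Hy). apply PSeries_ext. intro n. unfold PS_derive. apply I1. }
  assert (Hc := const_zero_deriv (fun y => sqrt (1 + y) * PSeries aa y - ln (1 + y) / 2) (4/5) x).
  simpl in Hc. rewrite Rplus_0_r, sqrt_1, Rmult_1_l, PSeries_0, ln_1 in Hc.
  assert (Hx' : -1 < x) by (apply Rabs_def2 in Hx; lra).
  assert (Hs : 0 < sqrt (1 + x)) by (apply sqrt_lt_R0; lra).
  assert (Heq : sqrt (1 + x) * PSeries aa x - ln (1 + x) / 2 = aa 0%nat - 0 / 2).
  { apply Hc; [|exact Hx]. intros y Hy.
    assert (Hy' : -1 < y) by (apply Rabs_def2 in Hy; lra).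
    assert (Ht : 0 < sqrt (1 + y)) by (apply sqrt_lt_R0; lra).
    assert (Htt : sqrt (1 + y) * sqrt (1 + y) = 1 + y) by (apply sqrt_sqrt; lra).
    assert (D := is_derive_mult _ _ y _ _ (sqrt_deriv y Hy')
               (is_derive_PSeries aa y (radius_ge _ aa_bound y Hy)) (fun a b => Rmult_comm a b)).
    assert (Dl : is_derive (fun y => ln (1 + y) / 2) y (/ (1 + y) / 2)).
    { auto_derive. lra. field. lra. }
    assert (D2 := is_derive_minus _ _ y _ _ D Dl).
    replace 0 with (minus (plus (mult (/ (2 * sqrt (1 + y))) (PSeries aa y))
                    (mult (sqrt (1 + y)) (PSeries (PS_derive aa) y))) (/ (1 + y) / 2)); [exact D2|].
    change (/ (2 * sqrt (1 + y)) * PSeries aa y + sqrt (1 + y) * PSeries (PS_derive aa) y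
             - / (1 + y) / 2 = 0).
    specialize (HE y Hy).
    set (s := sqrt (1 + y)) in *. clearbody s.
    set (A := PSeries aa y) in *. set (A' := PSeries (PS_derive aa) y) in *.
    rewrite <- Htt in HE |- *.
    assert (HA : A' = (/ (2 * s) - /2 * A) / (s * s)).
    { rewrite <- HE. field. lra. }
    rewrite HA. field. lra. }
  assert (Ha0 : aa 0%nat = 0) by (unfold aa; simpl; ring).
  rewrite Ha0 in Heq.
  apply Rmult_eq_reg_l with (sqrt (1 + x)); [|lra].
  transitivity (ln (1 + x) / 2); [|field; lra]. lra.
Qed.

Lemma coef_pow k x : coef k * (x ^ 2) ^ k = aa k * (x ^ 2 / 4) ^ k.
Proof.
  unfold coef, aa, dd. unfold Rdiv at 3. rewrite Rpow_mult_distr, pow_inv.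
  replace (16 ^ k) with (4 ^ k * 4 ^ k) by (rewrite <- Rpow_mult_distr; f_equal; lra).
  assert (4 ^ k <> 0) by (apply pow_nonzero; lra).
  field. auto.
Qed.

Lemma series_pow x t : x <> 0 -> x ^ 2 = x + 1 -> Rabs (x ^ 2 / 4) < 4/5 ->
  is_series (fun m => coef (S m) * powerRZ x (2 * Z.of_nat (S m) + t))
            (powerRZ x t * (ln ((x + 5) / 4) / sqrt (x + 5))).
Proof.
  intros Hx0 Hx2 Hu.
  set (u := x ^ 2 / 4) in *.
  assert (H0 := ps_is aa u (CV_radius_inside _ _ (radius_ge _ aa_bound u Hu))).
  assert (H1 : is_series (fun m => aa (S m) * u ^ (S m)) (PSeries aa u)).
  { apply (is_series_incr_1 (fun n => aa n * u ^ n)).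
    match goal with |- is_series _ ?l => replace l with (PSeries aa u); [exact H0|] end.
    change (PSeries aa u = PSeries aa u + aa 0%nat * u ^ 0). unfold aa; simpl; ring. }
  rewrite A_closed in H1 by exact Hu.
  assert (H2 := is_series_scal (powerRZ x t) _ _ H1).
  assert (Hxp : 0 < x + 5).
  { unfold u in Hu. apply Rabs_def2 in Hu. nra. }
  match goal with |- is_series _ ?l => replace l
    with (scal (powerRZ x t) (ln (1 + u) / (2 * sqrt (1 + u)))) end.
  - eapply is_series_ext; [|exact H2].
    intro m. change (powerRZ x t * (aa (S m) * u ^ S m) =
                     coef (S m) * powerRZ x (2 * Z.of_nat (S m) + t)).
    rewrite powerRZ_add by exact Hx0.
    replace (2 * Z.of_nat (S m))%Z with (Z.of_nat (2 * S m)) by lia.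
    rewrite <- pow_powerRZ, pow_mult. unfold u. rewrite <- coef_pow. ring.
  - change (powerRZ x t * (ln (1 + u) / (2 * sqrt (1 + u))) =
            powerRZ x t * (ln ((x + 5) / 4) / sqrt (x + 5))).
    replace (1 + u) with ((x + 5) / 4) by (unfold u; rewrite Hx2; field).
    rewrite sqrt_div_alt by lra.
    replace (sqrt 4) with 2 by (replace 4 with (2 * 2) by ring; rewrite sqrt_square; lra).
    assert (0 < sqrt (x + 5)) by (apply sqrt_lt_R0; lra).
    field. lra.
Qed.

Lemma s5_facts : sqrt 5 * sqrt 5 = 5 /\ 2 < sqrt 5 < 13/5.
Proof.
  assert (H : sqrt 5 * sqrt 5 = 5) by (apply sqrt_sqrt; lra).
  assert (0 <= sqrt 5) by apply sqrt_pos.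
  split; [exact H|]. split; nra.
Qed.

Lemma beta_eq : beta = (1 - sqrt 5) / 2.
Proof.
  destruct s5_facts as [H [H1 H2]].
  unfold beta, alpha. field_simplify_eq; [|lra].
  replace (sqrt 5 ^ 2) with 5 by (simpl; lra). lra.
Qed.

Definition Gc (a b : R) (j : Z) : R :=
  ((b - a * beta) * powerRZ alpha j + (a * alpha - b) * powerRZ beta j) / sqrt 5.

Lemma alpha_sq : alpha ^ 2 = alpha + 1.
Proof. destruct s5_facts as [H _]. unfold alpha. field_simplify. nra. Qed.
Lemma beta_sq : beta ^ 2 = beta + 1.
Proof. destruct s5_facts as [H _]. rewrite beta_eq. field_simplify. nra. Qed.
Lemma alpha_nz : alpha <> 0.
Proof. destruct s5_facts as [_ [H _]]. unfold alpha. lra. Qed.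
Lemma beta_nz : beta <> 0.
Proof. destruct s5_facts as [_ [H H']]. rewrite beta_eq. lra. Qed.

Lemma pow_rec x j : x <> 0 -> x ^ 2 = x + 1 ->
  powerRZ x (j + 2) = powerRZ x (j + 1) + powerRZ x j.
Proof.
  intros H0 H2. rewrite !powerRZ_add by exact H0. simpl.
  replace (x * (x * 1)) with (x ^ 2) by ring. rewrite H2. ring.
Qed.

Lemma Gc_rec a b j : Gc a b (j + 2) = Gc a b (j + 1) + Gc a b j.
Proof.
  unfold Gc. rewrite (pow_rec alpha) by (apply alpha_nz || apply alpha_sq).
  rewrite (pow_rec beta) by (apply beta_nz || apply beta_sq).
  destruct s5_facts as [_ [H _]]. field. lra.
Qed.

Lemma Gc_0 a b : Gc a b 0 = a.
Proof.
  unfold Gc. simpl. rewrite beta_eq. unfold alpha.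
  destruct s5_facts as [H [H1 _]]. field_simplify_eq; [|lra].
  try replace (sqrt 5 ^ 2) with 5 by (simpl; lra). try ring. 
Qed.

Lemma Gc_1 a b : Gc a b 1 = b.
Proof.
  unfold Gc. simpl. rewrite beta_eq. unfold alpha.
  destruct s5_facts as [H [H1 _]]. field_simplify_eq; [|lra].
  try replace (sqrt 5 ^ 2) with 5 by (simpl; lra). try ring. 
Qed.

Lemma fwd a b n : gib_fwd a b n = (Gc a b (Z.of_nat n), Gc a b (Z.of_nat n + 1)).
Proof.
  induction n.
  - simpl. rewrite Gc_0, Gc_1. reflexivity.
  - cbn [gib_fwd gib_bwd]. rewrite IHn. f_equal.
    + f_equal. lia.
    + replace (Z.of_nat (S n) + 1)%Z with (Z.of_nat n + 2)%Z by lia.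
      rewrite Gc_rec. ring.
Qed.

Lemma bwd a b n : gib_bwd a b n = (Gc a b (- Z.of_nat n), Gc a b (- Z.of_nat n + 1)).
Proof.
  induction n.
  - simpl. rewrite Gc_0, Gc_1. reflexivity.
  - cbn [gib_fwd gib_bwd]. rewrite IHn. f_equal.
    + pose proof (Gc_rec a b (- Z.of_nat (S n))) as E.
      replace (- Z.of_nat (S n) + 2)%Z with (- Z.of_nat n + 1)%Z in E by lia.
      replace (- Z.of_nat (S n) + 1)%Z with (- Z.of_nat n)%Z in E by lia.
      lra.
    + f_equal. lia.
Qed.

Lemma gib_Gc a b j : gib a b j = Gc a b j.
Proof.
  destruct j as [|p|p]; simpl.
  - symmetry; apply Gc_0.
  - rewrite fwd. simpl. f_equal. apply positive_nat_Z.
  - rewrite bwd. simpl. f_equal. rewrite positive_nat_Z. reflexivity.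
Qed.

Lemma gib_series a b t :
    is_series (fun m : nat => coef (S m) * gib a b (2 * Z.of_nat (S m) + t))
      (/ sqrt 5 * ((b - a * beta) * powerRZ alpha t / sqrt (alpha + 5) * ln ((alpha + 5) / 4)
                   - (b - a * alpha) * powerRZ beta t / sqrt (beta + 5) * ln ((beta + 5) / 4))).
Proof.
  destruct s5_facts as [H5 [H1 H2]].
  assert (Ha := series_pow alpha t alpha_nz alpha_sq).
  assert (Hb := series_pow beta t beta_nz beta_sq).
  rewrite alpha_sq in Ha. rewrite beta_sq in Hb.
  assert (Ha' : Rabs ((alpha + 1) / 4) < 4/5) by (unfold alpha; apply Rabs_def1; lra).
  assert (Hb' : Rabs ((beta + 1) / 4) < 4/5) by (rewrite beta_eq; apply Rabs_def1; lra).
  specialize (Ha Ha'). specialize (Hb Hb').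
  pose proof (is_series_plus _ _ _ _ (is_series_scal ((b - a * beta) / sqrt 5) _ _ Ha)
                                     (is_series_scal ((a * alpha - b) / sqrt 5) _ _ Hb)) as H.
  match goal with |- is_series _ ?l => replace l with
     (plus (scal ((b - a * beta) / sqrt 5) (powerRZ alpha t * (ln ((alpha + 5) / 4) / sqrt (alpha + 5))))
           (scal ((a * alpha - b) / sqrt 5) (powerRZ beta t * (ln ((beta + 5) / 4) / sqrt (beta + 5))))) end.
  - eapply is_series_ext; [|exact H]. intro m.
    rewrite gib_Gc. unfold Gc.
    change ((b - a * beta) / sqrt 5 * (coef (S m) * powerRZ alpha (2 * Z.of_nat (S m) + t)) +
            (a * alpha - b) / sqrt 5 * (coef (S m) * powerRZ beta (2 * Z.of_nat (S m) + t)) =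
            coef (S m) * (((b - a * beta) * powerRZ alpha (2 * Z.of_nat (S m) + t) +
              (a * alpha - b) * powerRZ beta (2 * Z.of_nat (S m) + t)) / sqrt 5)).
    field. lra.
  - change ((b - a * beta) / sqrt 5 * (powerRZ alpha t * (ln ((alpha + 5) / 4) / sqrt (alpha + 5))) +
            (a * alpha - b) / sqrt 5 * (powerRZ beta t * (ln ((beta + 5) / 4) / sqrt (beta + 5))) =
            / sqrt 5 * ((b - a * beta) * powerRZ alpha t / sqrt (alpha + 5) * ln ((alpha + 5) / 4)
                   - (b - a * alpha) * powerRZ beta t / sqrt (beta + 5) * ln ((beta + 5) / 4))).
    assert (0 < sqrt (alpha + 5)) by (apply sqrt_lt_R0; unfold alpha; lra).
    assert (0 < sqrt (beta + 5)) by (apply sqrt_lt_R0; rewrite beta_eq; lra).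
    field. lra.
Qed.

Theorem theorem15 : forall t : Z,
  is_series (fun m : nat => coef (S m) * Luc (2 * Z.of_nat (S m) + t))
    (powerRZ alpha t / sqrt (alpha + 5) * ln ((alpha + 5) / 4)
     + powerRZ beta t / sqrt (beta + 5) * ln ((beta + 5) / 4))
  /\
  is_series (fun m : nat => coef (S m) * Fib (2 * Z.of_nat (S m) + t))
    (/ sqrt 5 * (powerRZ alpha t / sqrt (alpha + 5) * ln ((alpha + 5) / 4)
                 - powerRZ beta t / sqrt (beta + 5) * ln ((beta + 5) / 4)))
  /\
  (forall a b : R, ~ (a = 0 /\ b = 0) ->
    is_series (fun m : nat => coef (S m) * gib a b (2 * Z.of_nat (S m) + t))
      (/ sqrt 5 * ((b - a * beta) * powerRZ alpha t / sqrt (alpha + 5) * ln ((alpha + 5) / 4)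
                   - (b - a * alpha) * powerRZ beta t / sqrt (beta + 5) * ln ((beta + 5) / 4)))).
Proof.
  intro t. destruct s5_facts as [H5 [H1 H2]].
  assert (0 < sqrt (alpha + 5)) by (apply sqrt_lt_R0; unfold alpha; lra).
  assert (0 < sqrt (beta + 5)) by (apply sqrt_lt_R0; rewrite beta_eq; lra).
  split; [|split].
  - unfold Luc. match goal with |- is_series _ ?l => replace l with
      (/ sqrt 5 * ((1 - 2 * beta) * powerRZ alpha t / sqrt (alpha + 5) * ln ((alpha + 5) / 4)
                   - (1 - 2 * alpha) * powerRZ beta t / sqrt (beta + 5) * ln ((beta + 5) / 4))) end.
    + apply gib_series.
    + replace (1 - 2 * beta) with (sqrt 5) by (rewrite beta_eq; field).
      replace (1 - 2 * alpha) with (- sqrt 5) by (unfold alpha; field).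
      field. lra.
  - unfold Fib. match goal with |- is_series _ ?l => replace l with
      (/ sqrt 5 * ((1 - 0 * beta) * powerRZ alpha t / sqrt (alpha + 5) * ln ((alpha + 5) / 4)
                   - (1 - 0 * alpha) * powerRZ beta t / sqrt (beta + 5) * ln ((beta + 5) / 4))) end.
    + apply gib_series.
    + field. lra.
  - intros a b _. apply gib_series.
Qed.
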